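(* Consider the distributed detection model in the context with $N\ge 2$, and let $m=\frac{N}{2N-2}$. Suppose the fusion center uses the majority rule $K^*=\lceil\frac{N+1}{2}\rceil$ and that $\alpha<\min\{0.5-P_f,\;1-m/P_d\}$. Then for any fixed $P_{1,0}\in[0,1]$, the error probability $P_E$ is a quasi-convex function of $P_{0,1}\in[0,1]$.
   Context: Binary hypothesis test between $H_0$ and $H_1$ with priors $P_0,P_1\in(0,1)$, $P_0+P_1=1$. There are $N$ sensors; conditionally on the hypothesis, their local decisions $v_i\in\{0,1\}$ are i.i.d. with $P(v_i=1\mid H_1)=P_d$, $P(v_i=1\mid H_0)=P_f$, where $0<P_f<P_d<1$. Each sensor independently is Byzantine with probability $\alpha\in[0,1]$. Honest nodes send $u_i=v_i$; a Byzantine node sends $u_i=1$ with probability $P_{1,0}$ when $v_i=0$ and sends $u_i=0$ with probability $P_{0,1}$ when $v_i=1$. Hence conditionally on $H_j$ the $u_i$ are i.i.d. with $P(u_i=1\mid H_0)=\pi_{1,0}=\alpha(P_{1,0}(1-P_f)+(1-P_{0,1})P_f)+(1-\alpha)P_f$ and $P(u_i=1\mid H_1)=\pi_{1,1}=\alpha(P_{1,0}(1-P_d)+(1-P_{0,1})P_d)+(1-\alpha)P_d$. A $K$-out-of-$N$ fusion rule decides $H_1$ iff at least $K$ of the $u_i$ equal $1$; its global false alarm and detection probabilities are $Q_F=\sum_{i=K}^N\binom{N}{i}\pi_{1,0}^i(1-\pi_{1,0})^{N-i}$ and $Q_D=\sum_{i=K}^N\binom{N}{i}\pi_{1,1}^i(1-\pi_{1,1})^{N-i}$,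 and its error probability is $P_E=P_0Q_F+P_1(1-Q_D)$. A function $f$ on an interval is called quasi-convex if there is a point $x^*$ such that $f$ is non-increasing for $x\le x^*$ and non-decreasing for $x\ge x^*$ (this includes $f$ monotone on the whole interval). *)

(* Defs.v *)
From HB Require Import structures.
From mathcomp Require Import all_boot all_order all_algebra.
From mathcomp Require Import reals.
Set Implicit Arguments. Unset Strict Implicit. Unset Printing Implicit Defensive.
Import Order.TTheory GRing.Theory Num.Theory.
Local Open Scope ring_scope.

Section Defs.
Variable R : realType.

(* P(u_i = 1 | H_0) *)
Definition pi10 (alpha P10 P01 Pf : R) : R :=
  alpha * (P10 * (1 - Pf) + (1 - P01) * Pf) + (1 - alpha) * Pf.

(* P(u_i = 1 | H_1) *)
Definition pi11 (alpha P10 P01 Pd : R) : R :=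
  alpha * (P10 * (1 - Pd) + (1 - P01) * Pd) + (1 - alpha) * Pd.

Definition binom_tail (N K : nat) (p : R) : R :=
  \sum_(K <= i < N.+1) ('C(N, i))%:R * p ^+ i * (1 - p) ^+ (N - i).

Definition QF (N K : nat) (alpha P10 P01 Pf : R) : R :=
  binom_tail N K (pi10 alpha P10 P01 Pf).

Definition QD (N K : nat) (alpha P10 P01 Pd : R) : R :=
  binom_tail N K (pi11 alpha P10 P01 Pd).

Definition PE (N K : nat) (P0 P1 alpha P10 P01 Pf Pd : R) : R :=
  P0 * QF N K alpha P10 P01 Pf + P1 * (1 - QD N K alpha P10 P01 Pd).

Definition quasi_convex_on (a b : R) (f : R -> R) : Prop :=
  exists xs : R,
    (forall x y, a <= x -> x <= y -> y <= xs -> y <= b -> f y <= f x) /\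
    (forall x y, xs <= x -> a <= x -> x <= y -> y <= b -> f x <= f y).
End Defs.

(* Majority rule K* = ceil((N+1)/2) = floor((N+2)/2). *)
Definition Kstar (N : nat) : nat := (N.+2)./2.

(* Main.v *)
Require Import Defs.
From HB Require Import structures.
From mathcomp Require Import all_boot all_order all_algebra.
From mathcomp Require Import reals.
From mathcomp Require Import polyrcf zify ring lra.
Import Order.TTheory GRing.Theory Num.Theory.
Local Open Scope ring_scope.

Lemma mvt_le (R : realType) (q : {poly R}) x y : x <= y ->
  (forall c, x < c -> c < y -> q^`().[c] <= 0) -> q.[y] <= q.[x].
Proof.
rewrite le_eqVlt => /predU1P [->|lt] h; first by [].
have [c ci E] := poly_mvt q lt.
rewrite -subr_le0 E; apply: mulr_le0_ge0; last by rewrite subr_ge0 ltW.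
by apply: h; rewrite (itvP ci).
Qed.

Lemma mvt_ge (R : realType) (q : {poly R}) x y : x <= y ->
  (forall c, x < c -> c < y -> 0 <= q^`().[c]) -> q.[x] <= q.[y].
Proof.
rewrite le_eqVlt => /predU1P [->|lt] h; first by [].
have [c ci E] := poly_mvt q lt.
rewrite -subr_ge0 E; apply: mulr_ge0; last by rewrite subr_ge0 ltW.
by apply: h; rewrite (itvP ci).
Qed.

Definition gp (R : realType) (a b : nat) : {poly R} := 'X^a * (1 - 'X) ^+ b.

Lemma gp_horner (R : realType) a b (p : R) : (gp R a b).[p] = p ^+ a * (1 - p) ^+ b.
Proof. by rewrite /gp !hornerE. Qed.

Lemma gp_deriv (R : realType) a b (p : R) :
  (gp R a.+1 b.+1)^`().[p] = p ^+ a * (1 - p) ^+ b * (a.+1%:R * (1 - p) - b.+1%:R * p).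
Proof.
rewrite /gp derivM derivXn deriv_exp derivB -polyC1 derivC derivX /=.
rewrite !(hornerMn, hornerE) /= [p ^+ a.+1]exprS [(1-p)^+b.+1]exprS. ring.
Qed.

Lemma gp_inc (R : realType) a b (p q : R) : 0 <= p -> p <= q ->
  (a.+1 + b.+1)%:R * q <= a.+1%:R -> (gp R a.+1 b.+1).[p] <= (gp R a.+1 b.+1).[q].
Proof.
move=> p0 pq hq; apply: mvt_ge => // c pc cq.
rewrite gp_deriv; rewrite natrD in hq.
have hA : 0 < a.+1%:R :> R by rewrite ltr0n.
have hB : 0 < b.+1%:R :> R by rewrite ltr0n.
have hc : (a.+1%:R + b.+1%:R) * c <= (a.+1%:R + b.+1%:R) * q.
  by nra.
have q1 : q < 1 by nra.
apply: mulr_ge0; last lra.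
apply: mulr_ge0; apply: exprn_ge0; lra.
Qed.

Lemma gp_dec (R : realType) a b (p q : R) : p <= q -> q <= 1 ->
  a.+1%:R <= (a.+1 + b.+1)%:R * p -> (gp R a.+1 b.+1).[q] <= (gp R a.+1 b.+1).[p].
Proof.
move=> pq q1 hp; apply: mvt_le => // c pc cq.
rewrite gp_deriv; rewrite natrD in hp.
have hA : 0 < a.+1%:R :> R by rewrite ltr0n.
have hB : 0 < b.+1%:R :> R by rewrite ltr0n.
have hc : (a.+1%:R + b.+1%:R) * p <= (a.+1%:R + b.+1%:R) * c.
  by nra.
have p0 : 0 < p by nra.
apply: mulr_ge0_le0; last lra.
apply: mulr_ge0; apply: exprn_ge0; lra.
Qed.
Definition Bp (R : realType) (N K : nat) : {poly R} :=
  \sum_(K <= i < N.+1) ('C(N, i))%:R *: ('X^i * (1 - 'X) ^+ (N - i)).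

Lemma Bp_horner (R : realType) N K (p : R) : (Bp R N K).[p] = binom_tail N K p.
Proof.
rewrite /Bp /binom_tail horner_sum; apply: eq_bigr => i _.
by rewrite !hornerE.
Qed.

Lemma Bp_deriv (R : realType) N K (p : R) : (1 <= K)%N -> (K <= N)%N ->
  (Bp R N K)^`().[p] = (N * 'C(N.-1, K.-1))%:R * (p ^+ K.-1 * (1 - p) ^+ (N - K)).
Proof.
move=> K1 KN.
pose u (i : nat) : R := (N * 'C(N.-1, i.-1))%:R * (p ^+ i.-1 * (1 - p) ^+ (N - i)).
rewrite /Bp raddf_sum horner_sum.
transitivity (\sum_(K <= i < N.+1) (u i - u i.+1)).
  apply: eq_big_nat => i /andP[Ki iN].
  case: i Ki iN => [|j] Ki iN; first by rewrite leqn0 in Ki; rewrite (eqP Ki) in K1.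
  rewrite /= derivZ derivM derivXn deriv_exp derivB -polyC1 derivC derivX /=.
  rewrite !(hornerMn, hornerE) /= -subnS /u /=.
  rewrite mul_bin_diag mul_bin_down !natrM.
  ring.
rewrite (eq_bigr (fun i => - (u i.+1 - u i))); last by move=> i _; rewrite opprB.
rewrite sumrN telescope_sumr; last by apply: leqW.
rewrite /u bin_small; last by rewrite /= ltn_predL (leq_trans K1 KN).
by rewrite muln0 mul0r opprB subr0.
Qed.

Definition Qp (R : realType) N K (P0 P1 c0 d0 c1 d1 : R) : {poly R} :=
  P0 *: (Bp R N K \Po (c0%:P - d0 *: 'X)) +
  P1 *: (1 - Bp R N K \Po (c1%:P - d1 *: 'X)).

Lemma Qp_horner (R : realType) N K (P0 P1 c0 d0 c1 d1 t : R) :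
  (Qp R N K P0 P1 c0 d0 c1 d1).[t] =
  P0 * binom_tail N K (c0 - d0 * t) + P1 * (1 - binom_tail N K (c1 - d1 * t)).
Proof. by rewrite /Qp -!Bp_horner !(hornerE, horner_comp). Qed.

Lemma Qp_deriv (R : realType) N K (P0 P1 c0 d0 c1 d1 t : R) :
  (1 <= K)%N -> (K <= N)%N ->
  (Qp R N K P0 P1 c0 d0 c1 d1)^`().[t] =
  (N * 'C(N.-1, K.-1))%:R *
   (P1 * d1 * ((c1 - d1 * t) ^+ K.-1 * (1 - (c1 - d1 * t)) ^+ (N - K))
   - P0 * d0 * ((c0 - d0 * t) ^+ K.-1 * (1 - (c0 - d0 * t)) ^+ (N - K))).
Proof.
move=> K1 KN.
rewrite /Qp !derivE -polyC1 !deriv_comp !derivE.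
rewrite !(hornerE, horner_comp) !Bp_deriv //.
rewrite /=. ring.
Qed.

Lemma p0_bounds (R : realType) (A B n alpha P10 Pf t : R) :
  0 < Pf -> Pf < 1 -> 0 <= alpha -> alpha < 1 / 2 - Pf -> 0 <= P10 -> P10 <= 1 ->
  0 <= t -> t <= 1 -> A + B = n - 1 -> n - 1 <= 2 * A -> 1 <= n ->
  0 <= pi10 alpha P10 t Pf /\ (A + B) * pi10 alpha P10 t Pf <= A.
Proof.
move=> Pfp Pf1 al0 ha1 q0 q1 t0 t1 hAB h2A' n1; rewrite /pi10.
set X := P10 * (1 - Pf) + (1 - t) * Pf.
have X0 : 0 <= X by rewrite /X; apply: addr_ge0; apply: mulr_ge0; lra.
have X1 : X <= 1.
  have e1 : P10 * (1 - Pf) <= 1 * (1 - Pf) by apply: ler_wpM2r; lra.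
  have e2 : (1 - t) * Pf <= 1 * Pf by apply: ler_wpM2r; lra.
  rewrite /X; lra.
have aX0 : 0 <= alpha * X by apply: mulr_ge0.
have aX1 : alpha * X <= alpha * 1 by apply: ler_wpM2l.
have f0 : 0 <= (1 - alpha) * Pf by apply: mulr_ge0; lra.
have f1 : (1 - alpha) * Pf <= 1 * Pf by apply: ler_wpM2r; lra.
split; first lra.
rewrite hAB.
have : (n - 1) * (alpha * X + (1 - alpha) * Pf) <= (n - 1) * (1 / 2).
  by apply: ler_wpM2l; lra.
lra.
Qed.

Lemma p1_bounds (R : realType) (A B n m alpha P10 Pd t : R) :
  0 < Pd -> Pd < 1 -> 0 <= alpha -> alpha <= 1 -> m < (1 - alpha) * Pd ->
  0 <= P10 -> P10 <= 1 ->
  0 <= t -> t <= 1 -> A + B = n - 1 -> (n - 1) * m = n / 2 -> 2 * A <= n -> 1 <= n ->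
  pi11 alpha P10 t Pd <= 1 /\ A <= (A + B) * pi11 alpha P10 t Pd.
Proof.
move=> Pdp Pd1 al0 al1 hm q0 q1 t0 t1 hAB hnm h2A n1; rewrite /pi11.
set X := P10 * (1 - Pd) + (1 - t) * Pd.
have X0 : 0 <= X by rewrite /X; apply: addr_ge0; apply: mulr_ge0; lra.
have X1 : X <= 1.
  have e1 : P10 * (1 - Pd) <= 1 * (1 - Pd) by apply: ler_wpM2r; lra.
  have e2 : (1 - t) * Pd <= 1 * Pd by apply: ler_wpM2r; lra.
  rewrite /X; lra.
have aX0 : 0 <= alpha * X by apply: mulr_ge0.
have aX1 : alpha * X <= alpha * 1 by apply: ler_wpM2l.
have f1 : (1 - alpha) * Pd <= (1 - alpha) * 1 by apply: ler_wpM2l; lra.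
split; first lra.
rewrite hAB.
have : (n - 1) * m <= (n - 1) * (alpha * X + (1 - alpha) * Pd).
  by apply: ler_wpM2l; lra.
lra.
Qed.

Lemma nat_facts N : (3 <= N)%N -> exists a b, N./2 = a.+1 /\ (N - (N./2).+1 = b.+1)%N /\
  (a.+1 + b.+1 = N - 1)%N /\ (2 * a.+1 <= N)%N /\ (N - 1 <= 2 * a.+1)%N.
Proof.
move=> N3; have hh := odd_double_half N.
exists (N./2).-1, (N - (N./2).+1).-1.
case: (odd N) hh => /= hh; lia.
Qed.

Theorem lemma3 (R : realType) (N : nat) (P0 P1 Pf Pd alpha P10 : R) :
  (2 <= N)%N ->
  0 < P0 < 1 -> 0 < P1 < 1 -> P0 + P1 = 1 ->
  0 < Pf -> Pf < Pd -> Pd < 1 ->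
  0 <= alpha <= 1 ->
  0 <= P10 <= 1 ->
  alpha < Num.min (1 / 2 - Pf)
                  (1 - (N%:R / (2 * N%:R - 2)) / Pd) ->
  quasi_convex_on 0 1
    (fun P01 => PE N (Kstar N) P0 P1 alpha P10 P01 Pf Pd).
Proof.
move=> N2 /andP[P0p P0l] /andP[P1p P1l] Psum Pfp PfPd Pd1 /andP[al0 al1]
  /andP[q0 q1] halpha.
rewrite lt_min in halpha; case/andP: halpha => ha1 ha2.
set n : R := N%:R.
set m : R := n / (2 * n - 2).
have n2 : 2 <= n by rewrite /n (ler_nat R 2 N).
have hm : m < (1 - alpha) * Pd.
  have Pdp : 0 < Pd by lra.
  have : m / Pd < 1 - alpha by move: ha2; rewrite -/n -/m; lra.
  by rewrite ltr_pdivrMr.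
have hnm : (n - 1) * m = n / 2.
  by rewrite /m; field; apply/eqP; lra.
have N3 : (3 <= N)%N.
  move: N2; rewrite leq_eqVlt => /orP[/eqP N2|//].
  have n2' : n = 2 by rewrite /n -N2.
  have m1 : m = 1 by rewrite /m n2'; field.
  nra.
have [a [b [ha [hb [hab [h2a h2b]]]]]] := nat_facts N N3.
set K := Kstar N.
have hK : K = a.+2 by rewrite /K /Kstar /= ha.
have hK' : (N - K = b.+1)%N by rewrite /K /Kstar /= hb.
have K1 : (1 <= K)%N by rewrite hK.
have KN : (K <= N)%N by move: hK'; clear; lia.
set A : R := a.+1%:R.
set B : R := b.+1%:R.
have hAB : A + B = n - 1 by rewrite /A /B -natrD hab natrB // (leq_trans _ N3).
have h2A : 2 * A <= n by rewrite /A /n -(natrM R 2) ler_nat.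
have eN1 : (N - 1)%:R = n - 1 :> R by rewrite natrB ?(leq_trans _ N3).
have h2A' : n - 1 <= 2 * A by rewrite -eN1 /A -(natrM R 2) ler_nat.
have A0 : 0 < A by rewrite /A ltr0n.
have B0 : 0 < B by rewrite /B ltr0n.
have n1 : 1 <= n by lra.
have Pf1 : Pf < 1 by lra.
have Pdp : 0 < Pd by lra.
have ha1' : alpha < 1 / 2 - Pf by [].
clear ha2.
pose p0 t := pi10 alpha P10 t Pf.
pose p1 t := pi11 alpha P10 t Pd.
have p0lin t : p0 0 - alpha * Pf * t = p0 t by rewrite /p0 /pi10; ring.
have p1lin t : p1 0 - alpha * Pd * t = p1 t by rewrite /p1 /pi11; ring.
pose Q := Qp R N K P0 P1 (p0 0) (alpha * Pf) (p1 0) (alpha * Pd).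
have Qh t : Q.[t] = PE N K P0 P1 alpha P10 t Pf Pd.
  by rewrite /Q Qp_horner p0lin p1lin.
pose L : R := (N * 'C(N.-1, K.-1))%:R.
pose G x := (gp R a.+1 b.+1).[x].
have Dh t : Q^`().[t] =
    L * (P1 * (alpha * Pd) * G (p1 t) - P0 * (alpha * Pf) * G (p0 t)).
  by rewrite /Q Qp_deriv // p0lin p1lin /G !gp_horner hK' /L hK.
have mono s t : 0 <= s -> s <= t -> t <= 1 -> Q^`().[s] <= Q^`().[t].
  move=> s0 st t1.
  have t0 : 0 <= t by lra.
  have s1 : s <= 1 by lra.
  have aPd : 0 <= alpha * Pd by apply: mulr_ge0; lra.
  have aPf : 0 <= alpha * Pf by apply: mulr_ge0; lra.
  have [p1s1 _] := @p1_bounds R A B n m alpha P10 Pd s Pdp Pd1 al0 al1 hm q0 q1 s0 s1 hAB hnm h2A n1.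
  have [_ p1tA] := @p1_bounds R A B n m alpha P10 Pd t Pdp Pd1 al0 al1 hm q0 q1 t0 t1 hAB hnm h2A n1.
  have [p0t0 _] := @p0_bounds R A B n alpha P10 Pf t Pfp Pf1 al0 ha1' q0 q1 t0 t1 hAB h2A' n1.
  have [_ p0sA] := @p0_bounds R A B n alpha P10 Pf s Pfp Pf1 al0 ha1' q0 q1 s0 s1 hAB h2A' n1.
  have e1 : p1 t <= p1 s.
    by rewrite -p1lin -(p1lin s) lerD2l lerN2; apply: ler_wpM2l.
  have e0 : p0 t <= p0 s.
    by rewrite -p0lin -(p0lin s) lerD2l lerN2; apply: ler_wpM2l.
  have g1 : G (p1 s) <= G (p1 t).
    by apply: gp_dec => //; rewrite natrD.
  have g0 : G (p0 t) <= G (p0 s).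
    by apply: gp_inc => //; rewrite natrD.
  rewrite !Dh; apply: ler_wpM2l; first exact: ler0n.
  apply: lerB; apply: ler_wpM2l => //; apply: mulr_ge0 => //; lra.
have [xs [xs0 [xs1 [hlo hhi]]]] : exists xs, 0 <= xs /\ xs <= 1 /\
    (forall c, 0 <= c -> c < xs -> Q^`().[c] <= 0) /\
    (forall c, xs < c -> c <= 1 -> 0 <= Q^`().[c]).
  case: (lerP (Q^`().[1]) 0) => D1.
    exists 1; split; first lra; split; first lra; split.
      by move=> c c0 c1; apply: le_trans D1; apply: mono => //; lra.
    by move=> c c1 c1'; lra.
  case: (lerP 0 (Q^`().[0])) => D0.
    exists 0; split; first lra; split; first lra; split.
      by move=> c c0 c1; lra.
    by move=> c c0 c1; apply: le_trans D0 _; apply: mono => //; lra.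
  have [r ri /eqP rr] := @poly_ivt R (Q^`()) 0 1 ler01
    (introT andP (conj (ltW D0) (ltW D1))).
  case/andP: ri => r0 r1.
  exists r; split => //; split => //; split.
    by move=> c c0 c1; rewrite -rr; apply: mono => //; lra.
  by move=> c c0 c1; rewrite -rr; apply: mono => //; lra.
exists xs; split.
  move=> x y x0 xy yxs y1; rewrite -!Qh; apply: mvt_le => // c xc cy.
  by apply: hlo; lra.
move=> x y xsx x0 xy y1; rewrite -!Qh; apply: mvt_ge => // c xc cy.
by apply: hhi; lra.
Qed.
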